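(* Let $d\ge 1$ and let $\varphi(x)$ be an $\mathcal L_d$-formula in the single free variable $x$ which is a finite conjunction of literals, each of the form $[t(x):p]$ or $\neg[t(x):p]$ with $p\in\mathbb H_d$ and $t(x)$ a term obtained from $x$ by applying finitely many function symbols $u_U$, $\pi_q$. If $\mathcal H_d\models\exists x\,\varphi(x)$, then $\mathcal V_d\models\exists x\,\varphi(x)$.
   Context: Notation. For $d\ge 1$, $\mathbb H_d$ is the set of complex linear subspaces of $\mathbb C^d$, ordered by inclusion $\le$, with $\top=\mathbb C^d$, $\bot=\{0\}$, $p^\bot$ the orthogonal complement, $p\wedge q=p\cap q$ and $p\vee q=p+q$. $\mathbb V_d\subseteq\mathbb H_d$ is the set of one-dimensional subspaces (rays). $\mathbb U_d$ is the set of unitary operators on $\mathbb C^d$, and for $U\in\mathbb U_d$, $p\in\mathbb H_d$, $U(p)=\{Uv: v\in p\}$. The Sasaki projection is $p\,\&\,q := q\cap(q^\bot+p)$; equivalently $p\,\&\,q=\{\Pi_q v: v\in p\}$ where $\Pi_q$ is the orthogonal projector onto $q$. Language $\mathcal L_d$: a first-order language without equality and without constants, having a unary function symbol $u_U$ for each $U\in\mathbb U_d$, a unary function symbol $\pi_q$ for each $q\in\mathbb H_d$, and a unary relation symbol $[\,\cdot:p]$ for each $p\in\mathbb H_d$. Hilbert model $\mathcal H_d$: the $\mathcal L_d$-structure with domain $\mathbb H_d$, $u_U^{\mathcal H_d}(x)=U(x)$, $\pi_q^{\mathcal H_d}(x)=x\,\&\,q$, and $[x:p]^{\mathcal H_d}$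 holds iff $x\le p$. Vector model $\mathcal V_d$: the $\mathcal L_d$-structure with domain $\mathbb V_d\cup\{\bot\}$ and the same formulas: $u_U^{\mathcal V_d}(x)=U(x)$, $\pi_q^{\mathcal V_d}(x)=x\,\&\,q$, $[x:p]^{\mathcal V_d}$ iff $x\le p$. *)

(* Defs.v *)
(* C^d is modelled as row vectors 'rV[R[i]]_d over the
   complex numbers R[i] built from an arbitrary real field R : realType. *)
From HB Require Import structures.
From mathcomp Require Import all_boot all_order all_algebra.
From mathcomp Require Import reals.
From mathcomp Require Import complex.
Set Implicit Arguments. Unset Strict Implicit. Unset Printing Implicit Defensive.
Import Order.TTheory GRing.Theory Num.Theory.
Local Open Scope ring_scope.

Section QL.
Variables (R : realType) (d : nat).
Local Notation C := R[i].
Local Notation vec := 'rV[C]_d.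

Definition subsp := {vspace vec}.

Definition cinner (v w : vec) : C := \sum_(k < d) v 0 k * conjc (w 0 k).

(* orthogonal complement: vectors orthogonal to every basis vector of p *)
Definition ortho_mx (p : subsp) : 'M[C]_(d, \dim p) :=
  \matrix_(k < d, i < \dim p) conjc ((vbasis p)`_i 0 k).
Definition perp (p : subsp) : subsp :=
  lker (linfun (fun v : vec => v *m ortho_mx p)).

Definition sasaki (p q : subsp) : subsp := (q :&: (perp q + p))%VS.

Definition adjmx (U : 'M[C]_d) : 'M[C]_d := (map_mx conjc U)^T.
Record unitary := Unitary { umx :> 'M[C]_d ; _ : umx *m adjmx umx = 1%:M }.

(* action of U on subspaces: U(p) = { U v | v in p }  (row-vector convention:
   the column vector U v corresponds to the row vector v *m U^T) *)
Definition uact (U : unitary) (p : subsp) : subsp :=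
  (linfun (fun v : vec => v *m (umx U)^T) @: p)%VS.

Inductive term :=
| TVar : term
| TU : unitary -> term -> term
| TPi : subsp -> term -> term.

Fixpoint eval_term (t : term) (x : subsp) : subsp :=
  match t with
  | TVar => x
  | TU U t' => uact U (eval_term t' x)
  | TPi q t' => sasaki (eval_term t' x) q
  end.

Record literal := Literal { lit_pos : bool ; lit_term : term ; lit_sub : subsp }.

Definition sat_lit (x : subsp) (l : literal) : Prop :=
  if lit_pos l then (eval_term (lit_term l) x <= lit_sub l)%VS
  else ~~ (eval_term (lit_term l) x <= lit_sub l)%VS.

Definition sat (x : subsp) (phi : seq literal) : Prop :=
  foldr (fun l P => sat_lit x l /\ P) True phi.

Definition H_models_ex (phi : seq literal) : Prop := exists x : subsp, sat x phi.

(* V_d |= exists x, phi(x): domain = rays together with bot, i.e. dim <= 1;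
   the interpretations of the symbols are the same maps restricted to it *)
Definition V_models_ex (phi : seq literal) : Prop :=
  exists x : subsp, (\dim x <= 1)%N /\ sat x phi.

End QL.

(* Main.v *)
Require Import Defs.
From mathcomp Require Import all_boot all_order all_algebra.
From mathcomp Require Import reals complex.
From Stdlib Require Import Classical.
From mathcomp Require Import zify.
Set Implicit Arguments. Unset Strict Implicit. Unset Printing Implicit Defensive.
Import Order.TTheory GRing.Theory Num.Theory.
Local Open Scope ring_scope.

Section Aux.
Variables (R : realType) (d : nat).
Local Notation C := R[i].
Local Notation vec := 'rV[C]_d.
Local Notation subsp := (subsp R d).

Lemma cinner_sumr (v : vec) n (c : 'I_n -> C) (w : 'I_n -> vec) :
  cinner v (\sum_(i < n) c i *: w i) = \sum_(i < n) conjc (c i) * cinner v (w i).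
Proof.
rewrite /cinner.
under eq_bigr => k _ do rewrite summxE rmorph_sum mulr_sumr.
rewrite exchange_big /=; apply: eq_bigr => i _; rewrite mulr_sumr.
by apply: eq_bigr => k _; rewrite !mxE rmorphM mulrCA.
Qed.

Lemma capv_perp (q : subsp) : (q :&: perp q = 0)%VS.
Proof.
apply/eqP; rewrite -subv0; apply/subvP => v /memv_capP [vq vp]; rewrite memv0.
have hb (i : 'I_(\dim q)) : cinner v (vbasis q)`_i = 0.
  move: vp; rewrite /perp memv_ker (lfunE (mulmxr (ortho_mx q))) /=.
  move=> /eqP/matrixP/(_ 0 i); rewrite !mxE => <-.
  by apply: eq_bigr => k _; rewrite mxE.
have h0 : cinner v v = 0.
  rewrite {2}(coord_vbasis vq) cinner_sumr big1 // => i _.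
  by rewrite hb mulr0.
have hk : forall k, v 0 k * conjc (v 0 k) = 0.
  move=> k; move: h0; rewrite /cinner => /eqP; rewrite psumr_eq0.
    by move=> /allP /(_ k (mem_index_enum _)) /= /eqP.
  by move=> i _; apply: mulcJ_ge0.
apply/eqP/rowP => k; rewrite mxE.
by have /eqP := hk k; rewrite mulf_eq0 conjc_eq0 orbb => /eqP.
Qed.

Lemma dim_perp (q : subsp) : (d <= \dim q + \dim (perp q))%N.
Proof.
pose f : 'Hom(vec, 'rV[C]_(\dim q)) := linfun (fun v : vec => v *m ortho_mx q).
have := limg_ker_dim f fullv.
rewrite capfv dimvf /dim /= mul1n.
have : (\dim (f @: fullv) <= \dim q)%N.
  by have := dimvS (subvf (f @: fullv)); rewrite dimvf /dim /= mul1n.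
rewrite /perp -/f => h1 h2.
by apply: leq_trans (eq_leq (esym h2)) _; rewrite addnC leq_add2r.
Qed.

Lemma addv_perp (q : subsp) : (q + perp q)%VS = fullv.
Proof.
apply/eqP; rewrite eqEdim subvf /= dimv_disjoint_sum ?capv_perp //.
by rewrite dimvf /dim /= mul1n dim_perp.
Qed.

Definition Pq (q : subsp) : 'End(vec) := daddv_pi q (perp q).

Lemma Pq_fix (q : subsp) u : u \in q -> Pq q u = u.
Proof. exact: daddv_pi_id (capv_perp q). Qed.

Lemma Pq_add (q : subsp) w : Pq q w + daddv_pi (perp q) q w = w.
Proof. by apply: daddv_pi_add (capv_perp q) _; rewrite addv_perp memvf. Qed.

Lemma Pq_kill (q : subsp) a : a \in perp q -> Pq q a = 0.
Proof.
move=> ha; have := Pq_add q a.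
rewrite (daddv_pi_id _ ha); last by rewrite capvC capv_perp.
by move=> h; rewrite -(addrK a (Pq q a)) h subrr.
Qed.

Lemma Pq_res (q : subsp) v : v - Pq q v \in perp q.
Proof.
by rewrite -{1}(Pq_add q v) addrAC subrr add0r memv_pi.
Qed.

Lemma sasakiE (p q : subsp) : sasaki p q = (Pq q @: p)%VS.
Proof.
apply/vspaceP => w; apply/idP/idP.
  move=> /memv_capP [wq /memv_addP [a ha [v hv def_w]]].
  apply/memv_imgP; exists v => //.
  by rewrite -(Pq_fix wq) def_w linearD /= (Pq_kill ha) add0r.
move=> /memv_imgP [v hv ->]; apply/memv_capP; split; first exact: memv_pi.
apply/memv_addP; exists (- (v - Pq q v)); first by rewrite memvN Pq_res.
by exists v => //; rewrite opprB subrK.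
Qed.

Fixpoint lin_term (t : term R d) : 'End(vec) :=
  match t with
  | TVar => \1%VF
  | TU U t' => (linfun (fun v : vec => v *m (umx U)^T) \o lin_term t')%VF
  | TPi q t' => (Pq q \o lin_term t')%VF
  end.

Lemma eval_lin t x : eval_term t x = (lin_term t @: x)%VS.
Proof.
elim: t => [|U t IH|q t IH] /=; first by rewrite lim1g.
  by rewrite IH /uact limg_comp.
by rewrite IH sasakiE limg_comp.
Qed.

Lemma line_avoid (W : subsp) (u w : vec) : u \notin W ->
  exists l0 : C, forall l, l != l0 -> u + l *: w \notin W.
Proof.
move=> hu; case: (classic (exists l0 : C, u + l0 *: w \in W)) => [[l0 h0]|hn].
  exists l0 => l hl; apply/negP => hl1.
  have hw : w \in W.
    have := memvB hl1 h0; rewrite opprD addrACA subrr add0r -scalerBl => hs.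
    rewrite -[w](scalerK (a := l - l0)) ?subr_eq0 //; exact: memvZ.
  by move: hu; rewrite -[u](addrK (l *: w)) memvB // memvZ.
exists 0 => l _; apply/negP => hl; apply: hn; by exists l.
Qed.

Lemma list_avoid (Ws : seq subsp) (u w : vec) :
  (forall W, W \in Ws -> u \notin W) ->
  exists S : seq C, forall l, l \notin S -> forall W, W \in Ws -> u + l *: w \notin W.
Proof.
elim: Ws => [|W Ws IH] hu; first by exists [::].
have [S hS] : exists S : seq C, forall l, l \notin S -> forall W', W' \in Ws -> u + l *: w \notin W'.
  by apply: IH => W' hW'; apply: hu; rewrite in_cons hW' orbT.
have [l0 h0] := line_avoid w (hu W (mem_head _ _)).
exists (l0 :: S) => l; rewrite in_cons negb_or => /andP [hl0 hlS] W'.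
by rewrite in_cons => /orP [/eqP -> | hW']; [apply: h0 | apply: hS].
Qed.

Lemma norm_le_sum (S : seq C) s : s \in S -> `|s| <= \sum_(x <- S) `|x|.
Proof.
elim: S => [//|x S IH]; rewrite in_cons big_cons => /orP [/eqP ->|hs].
  by rewrite lerDl sumr_ge0.
by apply: le_trans (IH hs) _; rewrite lerDr.
Qed.

Lemma fresh (S : seq C) : exists l, l \notin S.
Proof.
exists (1 + \sum_(x <- S) `|x|); apply/negP => h.
have := norm_le_sum h; rewrite ger0_norm ?addr_ge0 ?sumr_ge0 //.
by rewrite gerDr ler10.
Qed.

Lemma avoid (x : subsp) (Ws : seq subsp) :
  (forall W, W \in Ws -> ~~ (x <= W)%VS) ->
  exists2 v, v \in x & forall W, W \in Ws -> v \notin W.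
Proof.
elim: Ws => [|W Ws IH] hx; first by exists 0; rewrite ?mem0v.
have [u ux hu] : exists2 u, u \in x & forall W', W' \in Ws -> u \notin W'.
  by apply: IH => W' hW'; apply: hx; rewrite in_cons hW' orbT.
case hW: (u \in W); last first.
  exists u => // W'; rewrite in_cons => /orP [/eqP ->|]; [by rewrite hW | exact: hu].
have /subvPn [w wx wW] := hx W (mem_head _ _).
have [S hS] := list_avoid w hu.
have [l hl] := fresh (0 :: S).
move: hl; rewrite in_cons negb_or => /andP [hl0 hlS].
exists (u + l *: w); first by rewrite memvD // memvZ.
move=> W'; rewrite in_cons => /orP [/eqP ->|hW']; last exact: hS.
apply/negP => h; move: wW; rewrite -[w](scalerK hl0) memvZ //.
by rewrite -[l *: w](addKr u) memvD // memvN hW.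
Qed.

Fixpoint negWs (phi : seq (literal R d)) : seq subsp :=
  match phi with
  | [::] => [::]
  | l :: phi' => if lit_pos l then negWs phi'
                 else (lin_term (lit_term l) @^-1: lit_sub l)%VS :: negWs phi'
  end.

Lemma negWs_ok (x : subsp) phi : sat x phi -> forall W, W \in negWs phi -> ~~ (x <= W)%VS.
Proof.
elim: phi => [|l phi IH] //= [hl hphi] W.
case hp: (lit_pos l); first exact: IH.
rewrite in_cons => /orP [/eqP ->|]; last exact: IH.
move: hl; rewrite /sat_lit hp eval_lin => /subvPn [w /memv_imgP [u ux ->] hw].
by apply/subvPn; exists u => //; rewrite -memv_preim.
Qed.

Lemma sat_line (x : subsp) phi v : v \in x -> (forall W, W \in negWs phi -> v \notin W) ->
  sat x phi -> sat <[v]>%VS phi.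
Proof.
move=> vx; elim: phi => [|l phi IH] // hv [hl hphi]; split; last first.
  by apply: IH => // W hW; apply: hv => /=; case: (lit_pos l); rewrite ?in_cons hW ?orbT.
move: hl hv; rewrite /sat_lit /= !eval_lin; case: (lit_pos l) => hl hv.
  by apply: subv_trans hl; apply: limgS; rewrite -memvE.
rewrite limg_line -memvE memv_preim; exact: hv (mem_head _ _).
Qed.

End Aux.

Theorem mainTheorem5 (R : realType) (d : nat) (hd : (0 < d)%N)
  (phi : seq (literal R d)) :
  H_models_ex phi -> V_models_ex phi.
Proof.
move=> [x hx].
have [v vx hv] := avoid (negWs_ok hx).
exists <[v]>%VS; split; first by rewrite dim_vline leq_b1.
exact: sat_line vx hv hx.
Qed.
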